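(* Let $P$ be a classifier on $\mathbb{R}^n$ that is non-trivial, i.e. its label set $L_P$ has more than one element. Then $P$ has infinite pointwise coverage if and only if $P$ is a refined linear classifier.
   Context: A classifier is a partition $P$ of $\mathbb{R}^n$ together with a distinguished member $R \in P$, the refinement set, which may be empty and which is both meagre and Lebesgue null. The label set is $L_P = P \setminus \{R\}$ and the feature space is $\bigcup L_P$. For $x \in \mathbb{R}^n$, $P(x)$ denotes the member of $P$ containing $x$. The classifier is trivial if $L_P$ is a singleton, and non-trivial otherwise. An anchor for a point $x$ is an open ball $A = B(c,r)$ (center $c$, radius $r>0$) with $x \in A \subseteq P(x)$; its coverage is its radius $r$. The coverage of $P$ at $x$ is $C_P(x) = \sup\{ r : B(c,r) \text{ is an anchor for } x\}$, taken to be $0$ if $x$ has no anchor and $\infty$ if there are anchors for $x$ of arbitrarily large radius. $P$ has infinite pointwise coverage if $\inf\{C_P(x) : x \in \bigcup L_P\} = \infty$, i.e. $C_P(x) = \infty$ for every $x$ in the feature space. A refined linear classifier is a classifier of the form $P = \{M, N, R\}$ with $L_P = \{M, N\}$, where $R$ is an affine hyperplane in $\mathbb{R}^n$ and $M, N$ are the two open halfspaces on either side of $R$. *)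

(* Defs.v *)
(* R^n is modelled as 'rV[R]_n for R : realType,
   with the library's (product = Euclidean) topology; balls are Euclidean. *)
From HB Require Import structures.
From mathcomp Require Import all_boot all_order all_algebra.
From mathcomp Require Import all_classical all_reals all_analysis.
Set Implicit Arguments. Unset Strict Implicit. Unset Printing Implicit Defensive.
Import Order.TTheory GRing.Theory Num.Theory.
Import numFieldNormedType.Exports.
Local Open Scope classical_set_scope.
Local Open Scope ring_scope.

Section ClassifierDefs.
Variables (R : realType) (n : nat).
Local Notation V := 'rV[R]_n.

Definition eball (c : V) (r : R) : set V :=
  [set x | \sum_(i < n) (x ord0 i - c ord0 i) ^+ 2 < r ^+ 2].

Definition nowhere_dense (A : set V) : Prop := interior (closure A) = set0.

Definition meagre (A : set V) : Prop :=
  exists F : nat -> set V, (forall k, nowhere_dense (F k)) /\ A `<=` \bigcup_k F k.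

Definition box (a b : V) : set V := [set x | forall i, a ord0 i <= x ord0 i <= b ord0 i].
Definition box_vol (a b : V) : R := \prod_(i < n) (b ord0 i - a ord0 i).

Definition lebesgue_null (A : set V) : Prop :=
  forall eps : R, 0 < eps ->
  exists a b : nat -> V,
    (forall k i, a k ord0 i <= b k ord0 i) /\
    A `<=` \bigcup_k box (a k) (b k) /\
    (\sum_(0 <= k <oo) (box_vol (a k) (b k))%:E < eps%:E)%E.

Definition partition_with (P : set (set V)) (Rf : set V) : Prop :=
  (forall A B x, P A -> P B -> A x -> B x -> A = B) /\
  (forall x, exists A, P A /\ A x) /\
  (forall A, P A -> A <> Rf -> A !=set0).

Definition classifier (P : set (set V)) (Rf : set V) : Prop :=
  partition_with P Rf /\ P Rf /\ meagre Rf /\ lebesgue_null Rf.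

Definition label_set (P : set (set V)) (Rf : set V) : set (set V) :=
  [set A | P A /\ A <> Rf].

Definition feature_space (P : set (set V)) (Rf : set V) : set V :=
  \bigcup_(A in label_set P Rf) A.

Definition nontrivial (P : set (set V)) (Rf : set V) : Prop :=
  exists A B, label_set P Rf A /\ label_set P Rf B /\ A <> B.

Definition anchor (P : set (set V)) (x c : V) (r : R) : Prop :=
  0 < r /\ eball c r x /\ (forall A, P A -> A x -> eball c r `<=` A).

Definition coverage (P : set (set V)) (x : V) : \bar R :=
  let radii := [set (r%:E)%E | r in [set r | exists c, anchor P x c r]] in
  if radii == set0 then 0%E else ereal_sup radii.

Definition infinite_pointwise_coverage (P : set (set V)) (Rf : set V) : Prop :=
  ereal_inf [set coverage P x | x in feature_space P Rf] = +oo%E.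

Definition refined_linear (P : set (set V)) (Rf : set V) : Prop :=
  exists (a : V) (b : R), a != 0 /\
    let dot (x : V) : R := \sum_(i < n) a ord0 i * x ord0 i in
    let M := [set x | dot x > b] in
    let N := [set x | dot x < b] in
    Rf = [set x | dot x = b] /\
    P = [set A | A = M \/ A = N \/ A = Rf] /\
    label_set P Rf = [set A | A = M \/ A = N].

End ClassifierDefs.

(* Main.v *)
From HB Require Import structures.
From mathcomp Require Import all_boot all_order all_algebra.
From mathcomp Require Import all_classical all_reals all_analysis.
From mathcomp Require Import ring lra.
Require Import Defs.
Import Order.TTheory GRing.Theory Num.Theory.
Import numFieldNormedType.Exports.
Local Open Scope classical_set_scope.
Local Open Scope ring_scope.

Definition rVc (R : realType) n := 'rV[R]_n.
HB.instance Definition _ (R : realType) n := NormedModule.on (rVc R n).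
HB.instance Definition _ (R : realType) n := Complete.on (rVc R n).

Section Main.
Variables (R : realType) (n : nat).
Local Notation V := 'rV[R]_n.

Definition dotp (a x : V) : R := \sum_(i < n) a ord0 i * x ord0 i.
Definition sq (x : V) : R := \sum_(i < n) x ord0 i ^+ 2.

Lemma sumsq_add (f g : 'I_n -> R) :
  \sum_i (f i + g i) ^+ 2 = \sum_i f i ^+ 2 + 2 * \sum_i f i * g i + \sum_i g i ^+ 2.
Proof.
rewrite mulr_sumr -!big_split /=; apply: eq_bigr => i _; ring.
Qed.

Lemma sum_ge0_sq (f : 'I_n -> R) : 0 <= \sum_i f i ^+ 2.
Proof. by apply: sumr_ge0 => i _; exact: sqr_ge0. Qed.

Lemma sq_ge0 x : 0 <= sq x.
Proof. exact: sum_ge0_sq. Qed.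

Lemma term_le_sum (f : 'I_n -> R) j : f j ^+ 2 <= \sum_i f i ^+ 2.
Proof.
rewrite (bigD1 j) //= lerDl; apply: sumr_ge0 => i _; exact: sqr_ge0.
Qed.

Lemma dotpD a x y : dotp a (x + y) = dotp a x + dotp a y.
Proof. rewrite /dotp -big_split /=; apply: eq_bigr => i _; rewrite mxE; ring. Qed.

Lemma dotpZ a s x : dotp a (s *: x) = s * dotp a x.
Proof. rewrite /dotp mulr_sumr; apply: eq_bigr => i _; rewrite mxE; ring. Qed.

Lemma dotpN a x : dotp a (- x) = - dotp a x.
Proof. rewrite /dotp -sumrN; apply: eq_bigr => i _; rewrite mxE; ring. Qed.

Lemma dotpNl a x : dotp (- a) x = - dotp a x.
Proof. rewrite /dotp -sumrN; apply: eq_bigr => i _; rewrite mxE; ring. Qed.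

Lemma dotpZl a s x : dotp (s *: a) x = s * dotp a x.
Proof. rewrite /dotp mulr_sumr; apply: eq_bigr => i _; rewrite mxE; ring. Qed.

Lemma dotpB a x y : dotp a (x - y) = dotp a x - dotp a y.
Proof. by rewrite dotpD dotpN. Qed.

Lemma dotpC a x : dotp a x = dotp x a.
Proof. by apply: eq_bigr => i _; rewrite mulrC. Qed.

Lemma dotpDl a b x : dotp (a + b) x = dotp a x + dotp b x.
Proof. by rewrite dotpC dotpD !(dotpC x). Qed.

Lemma dotpp a : dotp a a = sq a.
Proof. by apply: eq_bigr => i _; rewrite expr2. Qed.

Lemma sqZ s a : sq (s *: a) = s ^+ 2 * sq a.
Proof. rewrite /sq mulr_sumr; apply: eq_bigr => i _; rewrite mxE; ring. Qed.

Lemma sqN a : sq (- a) = sq a.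
Proof. apply: eq_bigr => i _; rewrite mxE; ring. Qed.

Lemma sqD a b : sq (a + b) = sq a + 2 * dotp a b + sq b.
Proof.
rewrite /sq -sumsq_add; apply: eq_bigr => i _; by rewrite mxE.
Qed.

Lemma sq_eq0 a : sq a = 0 -> a = 0.
Proof.
move=> h; apply/rowP => i; rewrite mxE.
have := psumr_eq0P (P := predT) (F := fun i => a ord0 i ^+ 2) (fun i _ => sqr_ge0 _) h.
by move=> /(_ i isT) /eqP; rewrite sqrf_eq0 => /eqP.
Qed.

Lemma sq_gt0 a : a != 0 -> 0 < sq a.
Proof.
move=> a0; rewrite lt_def sq_ge0 andbT; apply/eqP => /sq_eq0 h.
by rewrite h eqxx in a0.
Qed.

Lemma entry_le_norm (v : V) i : `|v ord0 i| <= `|v|.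
Proof.
have -> : `|v| = mx_norm v by [].
rewrite mx_normrE; apply/bigmax_geP; right => /=.
by exists (ord0, i).
Qed.

Lemma cluster_seq (w : nat -> V) :
  (forall k i, -1 <= w k ord0 i <= 1) ->
  exists ws : V, forall d : R, 0 < d -> forall N : nat,
    exists k, (N <= k)%N /\ forall i, `|w k ord0 i - ws ord0 i| < d.
Proof.
move=> wb.
pose K := [set v : V | forall i, `[(-1:R), 1]%classic (v ord0 i)].
have cK : compact K.
  apply: (@rV_compact _ _ (fun=> `[(-1:R), 1]%classic)) => _.
  exact: segment_compact.
have FK : (w @ \oo) K.
  by apply: filterS (nbhs_infty_ge 0) => k _ i; rewrite /= in_itv /=; exact: wb.
have [ws [_ cl]] := cK _ (fmap_proper_filter w eventually_filter) FK.
exists ws => d d0 N.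
have A1 : (w @ \oo) (w @` [set k | (N <= k)%N]).
  by apply: filterS (nbhs_infty_ge N) => k Nk; exists k.
have [v [[k /= Nk <-] bv]] := cl _ _ A1 (@nbhsx_ballx _ _ ws d d0).
exists k; split => // i.
move: bv; rewrite -ball_normE /ball_ /= => h.
apply: le_lt_trans h; rewrite -normrN opprB.
have := entry_le_norm (w k - ws) i; by rewrite !mxE.
Qed.

Lemma eballE (c : V) r x : eball c r x <-> sq (x - c) < r ^+ 2.
Proof.
rewrite /eball /sq /=.
have -> : \sum_(i < n) (x ord0 i - c ord0 i) ^+ 2 = \sum_(i < n) (x - c) ord0 i ^+ 2.
  by apply: eq_bigr => i _; rewrite !mxE.
by [].
Qed.

Lemma dot_lower (d e g : V) t δ : (forall i, `|e ord0 i - t * g ord0 i| <= t * δ) ->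
  t * dotp d g - t * δ * (\sum_i `|d ord0 i|) <= dotp d e.
Proof.
move=> h; rewrite /dotp mulr_sumr mulr_sumr -sumrB; apply: ler_sum => i _.
have h1 : d ord0 i * e ord0 i = t * (d ord0 i * g ord0 i) + d ord0 i * (e ord0 i - t * g ord0 i) by ring.
rewrite h1 lerD2l.
have h2 : - `|d ord0 i * (e ord0 i - t * g ord0 i)| <= d ord0 i * (e ord0 i - t * g ord0 i).
  exact: lerNnormlW.
apply: le_trans h2; rewrite lerN2 normrM mulrC.
by apply: ler_wpM2r => //; exact: h.
Qed.

Lemma sq_upper (e : V) b : (forall i, `|e ord0 i| <= b) -> sq e <= n%:R * b ^+ 2.
Proof.
move=> h; rewrite /sq.
have -> : n%:R * b ^+ 2 = \sum_(i < n) b ^+ 2 by rewrite sumr_const card_ord mulr_natl.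
apply: ler_sum => i _; rewrite -real_normK ?num_real //.
have b0 : 0 <= b by apply: le_trans (h i).
by rewrite lerXn2r ?nnegrE // h.
Qed.

Lemma approx (e ws : V) r δ : 0 < r -> (forall i, `|(r^-1 *: e) ord0 i - ws ord0 i| < δ) ->
  forall i, `|e ord0 i - r * ws ord0 i| <= r * δ.
Proof.
move=> r0 h i; have := h i; rewrite mxE => hi.
have -> : e ord0 i - r * ws ord0 i = r * (r^-1 * e ord0 i - ws ord0 i).
  have rn : r != 0 by rewrite gt_eqF.
  by rewrite mulrBr mulrA mulfV // mul1r.
rewrite normrM gtr0_norm //; apply: ler_wpM2l; [exact: ltW | exact: ltW].
Qed.

Lemma entry_sq_le (v : V) r i : 0 < r -> sq v < r ^+ 2 -> `|v ord0 i| <= r.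
Proof.
move=> r0 h; have := le_lt_trans (term_le_sum (fun i => v ord0 i) i) h.
rewrite -real_normK ?num_real // => h2.
have := normr_ge0 (v ord0 i); nra.
Qed.

Lemma dotp0 (a : V) : dotp a 0 = 0.
Proof. by rewrite /dotp big1 // => i _; rewrite mxE mulr0. Qed.

Lemma halfspace (A : set V) (x o : V) :
  (forall M : R, exists c r, M < r /\ eball c r x /\ eball c r `<=` A) -> ~ A o ->
  exists u : V, sq u = 1 /\ forall y, dotp u x < dotp u y -> A y.
Proof.
move=> H no.
have H' : forall k : nat, exists cr : V * R,
    k%:R < cr.2 /\ eball cr.1 cr.2 x /\ eball cr.1 cr.2 `<=` A.
  by move=> k; have [c [r h]] := H k%:R; exists (c, r).
have [f hf] := choice H'.
pose c k := (f k).1. pose r k := (f k).2.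
have rk : forall k, k%:R < r k by move=> k; have [h _] := hf k.
have r0 : forall k, 0 < r k by move=> k; exact: le_lt_trans (ler0n _ k) (rk k).
have xin : forall k, sq (c k - x) < r k ^+ 2.
  by move=> k; have [_ [/eballE h _]] := hf k; rewrite -sqN opprB.
have sub : forall k, eball (c k) (r k) `<=` A by move=> k; have [_ [_ h]] := hf k.
pose w k := (r k)^-1 *: (c k - x).
have wb : forall k i, -1 <= w k ord0 i <= 1.
  move=> k i; rewrite /w mxE.
  have h := @entry_sq_le _ _ i (r0 k) (xin k).
  rewrite -ler_norml normrM gtr0_norm ?invr_gt0 // mulrC ler_pdivrMr // mul1r.
  by [].
have [ws hws] := @cluster_seq w wb.
have key : forall d, 0 < d -> forall N, exists k, (N <= k)%N /\
    forall i, `|(c k - x) ord0 i - r k * ws ord0 i| <= r k * d.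
  move=> d d0 N; have [k [Nk hk]] := hws d d0 N; exists k; split => //.
  exact: approx (r0 k) hk.
have expand : forall k y, sq (y - c k) =
    sq (y - x) - 2 * dotp (y - x) (c k - x) + sq (c k - x).
  move=> k y; have -> : y - c k = (y - x) + - (c k - x).
    by rewrite opprB addrA subrK.
  rewrite (sqD (y - x) (- (c k - x))) dotpN sqN; ring.
case: (eqVneq ws 0) => [ws0 | wsn0].
- exfalso; apply: no.
  pose d := o - x. pose K := \sum_i `|d ord0 i|. pose D := sq d. pose m : R := n%:R.
  have K0 : 0 <= K by apply: sumr_ge0.
  have D0 : 0 <= D := sq_ge0 d.
  have m0 : 0 <= m by [].
  pose δ := (2 * (m + 1))^-1.
  have hm : 0 < 2 * (m + 1) by lra.
  have δ0 : 0 < δ by rewrite invr_gt0.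
  have hδ : δ * (2 * (m + 1)) = 1 by rewrite mulVf // gt_eqF.
  have δ1 : δ <= 1 by nra.
  have mδ : m * δ <= 1/2 by nra.
  have mδ2 : m * δ ^+ 2 <= 1/2 by nra.
  pose X := 2 * (D + 2 * K + 1).
  pose N := (Num.Def.truncn X).+1.
  have [k [Nk hk]] := key δ δ0 N.
  have rX : X < r k.
    apply: lt_le_trans (truncnS_gt X) _; apply: ltW; apply: le_lt_trans (rk k).
    by rewrite ler_nat.
  apply: (sub k); apply/eballE; rewrite expand.
  have h1 := @dot_lower d _ _ _ _ hk; rewrite ws0 dotp0 mulr0 sub0r in h1.
  have h2 : sq (c k - x) <= m * (r k * δ) ^+ 2.
    have z0 : forall i, (0 : V) ord0 i = 0 by move=> i; rewrite mxE.
    by apply: sq_upper => i; have := hk i; rewrite ws0 z0 mulr0 subr0.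
  set P := dotp _ _ in h1 *; set S := sq (c k - x) in h2 *.
  set rr := r k in rX h1 h2 *.
  have rr0 : 0 < rr := r0 k.
  have hS : S <= rr ^+ 2 / 2.
    apply: le_trans h2 _; rewrite exprMn mulrA.
    have : m * rr ^+ 2 * δ ^+ 2 = rr ^+ 2 * (m * δ ^+ 2) by ring.
    nra.
  have hP : - (rr * K) <= P.
    apply: le_trans h1; rewrite lerN2 -mulrA; apply: ler_wpM2l; first exact: ltW.
    rewrite -/K; nra.
  have rX2 : 2 * (D + 2 * K + 1) < rr := rX.
  have h4 : rr * (D + 2 * K + 1) < rr * (rr / 2) by rewrite ltr_pM2l //; lra.
  have rr1 : 1 <= rr by lra.
  have h5 : D <= rr * D by rewrite ler_peMl.
  rewrite -/D; nra.
- pose s := (Num.sqrt (sq ws))^-1.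
  have sqp : 0 < sq ws := @sq_gt0 ws wsn0.

  have s0 : 0 < s by rewrite invr_gt0 sqrtr_gt0.
  exists (s *: ws); split.
    by rewrite sqZ /s exprVn sqr_sqrtr ?ltW // mulVf // gt_eqF.
  move=> y; rewrite !dotpZl ltr_pM2l // => hy.
  have eps0 : 0 < dotp ws (y - x) by rewrite dotpB subr_gt0.
  set ε := dotp ws (y - x) in eps0.
  pose d := y - x. pose K := \sum_i `|d ord0 i|. pose D := sq d.
  have K0 : 0 <= K by apply: sumr_ge0.
  have D0 : 0 <= D := sq_ge0 d.
  pose δ := ε / (2 * (K + 1)).
  have hK : 0 < 2 * (K + 1) by lra.
  have δ0 : 0 < δ by rewrite divr_gt0.
  have hδ : δ * (2 * (K + 1)) = ε by rewrite /δ mulfVK // gt_eqF.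
  have hδK : δ * K <= ε / 2 by nra.
  pose X := D / ε.
  pose N := (Num.Def.truncn X).+1.
  have [k [Nk hk]] := key δ δ0 N.
  have rX : X < r k.
    apply: lt_le_trans (truncnS_gt X) _; apply: ltW; apply: le_lt_trans (rk k).
    by rewrite ler_nat.
  have rX' : D < r k * ε by move: rX; rewrite ltr_pdivrMr.
  apply: (sub k); apply/eballE; rewrite expand.
  have h1 := @dot_lower d _ _ _ _ hk.
  have e1 : dotp d ws = ε by rewrite dotpC.
  rewrite e1 in h1.
  have h2 := xin k.
  set P := dotp _ _ in h1 *; set S := sq (c k - x) in h2 *.
  set rr := r k in rX' h1 h2 *.
  have rr0 : 0 < rr := r0 k.
  have h3 : rr * (δ * K) <= rr * (ε / 2) by apply: ler_wpM2l; [exact: ltW|].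
  rewrite -/K in h1; rewrite -/D; nra.
Qed.
Lemma opp_dir (u v x y : V) : sq u = 1 -> sq v = 1 ->
  (forall z, dotp u x < dotp u z -> dotp v y < dotp v z -> False) ->
  v = - u /\ dotp u y <= dotp u x.
Proof.
move=> hu hv H.
have g0 : sq (u + v) = 2 * (1 + dotp u v) by rewrite sqD hu hv; ring.
have vu : v = - u.
  have hle : 1 + dotp u v <= 0.
    rewrite leNgt; apply/negP => gp.
    pose s := (`|dotp u x| + `|dotp v y| + 1) / (1 + dotp u v).
    have hs : s * (1 + dotp u v) = `|dotp u x| + `|dotp v y| + 1.
      by rewrite /s mulfVK // gt_eqF.
    have n1 := ler_norm (dotp u x); have n2 := ler_norm (dotp v y).
    have n3 := normr_ge0 (dotp u x); have n4 := normr_ge0 (dotp v y).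
    apply: (H (s *: (u + v))).
      by rewrite dotpZ dotpD dotpp hu hs; lra.
    by rewrite dotpZ dotpD dotpp hv (dotpC v u) addrC hs; lra.
  have h0 : sq (u + v) = 0 by apply/eqP; rewrite eq_le sq_ge0 g0 andbT; lra.
  have := @sq_eq0 _ h0; move/eqP; rewrite addr_eq0 => /eqP ->; by rewrite opprK.
split => //.
rewrite leNgt; apply/negP => hlt.
pose t := (dotp u y - dotp u x) / 2.
apply: (H (x + t *: u)).
  by rewrite dotpD dotpZ dotpp hu /t; lra.
by rewrite vu !dotpNl dotpD dotpZ dotpp hu /t; lra.
Qed.

Lemma big_anchor (u x : V) γ M : sq u = 1 -> 0 < γ ->
  exists c r, M < r /\ eball c r x /\ (forall y, eball c r y -> dotp u x - γ < dotp u y).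
Proof.
move=> hu g0.
pose s := `|M| + 1.
have s0 : 0 < s by rewrite /s; have := normr_ge0 M; lra.
exists (x + s *: u), (s + γ / 2); split.
  by have := ler_norm M; rewrite /s; lra.
split.
  apply/eballE; rewrite opprD addrA subrr add0r sqN sqZ hu mulr1; nra.
move=> y /eballE hy.
set r := s + γ / 2 in hy *.
have r0 : 0 < r by rewrite /r; lra.
set wv := y - (x + s *: u) in hy.
have hsq := sq_ge0 (r *: u + wv).
rewrite sqD sqZ hu dotpZl mulr1 in hsq.
have hP : - r < dotp u wv.
  have : - (2 * r * r) < 2 * r * dotp u wv by nra.
  rewrite -mulrN ltr_pM2l //; nra.
have -> : y = wv + (x + s *: u) by rewrite /wv subrK.
rewrite dotpD dotpD dotpZ dotpp hu; rewrite /r in hP; lra.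
Qed.

Lemma eball_move (c : V) r z v : eball c r z -> sq v = 1 ->
  exists e, 0 < e /\ eball c r (z + e *: v).
Proof.
move=> /eballE hz hv.
set g := r ^+ 2 - sq (z - c).
have g0 : 0 < g by rewrite /g subr_gt0.
set h := dotp (z - c) v.
pose e := g / (2 * (`|h| + 1) + g).
have hn := normr_ge0 h; have hh := ler_norm h; have hh2 : - `|h| <= h by exact: lerNnormlW.
have den : 0 < 2 * (`|h| + 1) + g by lra.
have e0 : 0 < e by rewrite divr_gt0.
have he : e * (2 * (`|h| + 1) + g) = g by rewrite /e mulfVK // gt_eqF.
have e1 : e <= 1 by nra.
exists e; split => //; apply/eballE.
have -> : z + e *: v - c = (z - c) + e *: v by rewrite addrAC.
rewrite sqD sqZ hv dotpZ -/h mulr1.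
have : e * e <= e by nra.
have : e * h <= e * `|h| by rewrite ler_pM2l.
rewrite /g in g0 he; nra.
Qed.

Lemma dot_bound (u d : V) δ : (forall i, `|u ord0 i| <= 1) -> (forall i, `|d ord0 i| <= δ) ->
  `|dotp u d| <= n%:R * δ.
Proof.
move=> hu hd; apply: le_trans (ler_norm_sum _ _ _) _.
have -> : n%:R * δ = \sum_(i < n) δ by rewrite sumr_const card_ord mulr_natl.
apply: ler_sum => i _; rewrite normrM.
have := hu i; have := hd i; have := normr_ge0 (u ord0 i); have := normr_ge0 (d ord0 i).
nra.
Qed.

Lemma unit_entry (u : V) i : sq u = 1 -> `|u ord0 i| <= 1.
Proof.
move=> hu; have := term_le_sum (fun i => u ord0 i) i; rewrite -/(sq u) hu.
rewrite -real_normK ?num_real // => h; have := normr_ge0 (u ord0 i); nra.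
Qed.
Lemma slab_point (Rf : set V) (u : V) p q : meagre Rf -> sq u = 1 -> p < q ->
  exists z, p < dotp u z < q /\ ~ Rf z.
Proof.
move=> [F [nd sub]] hu pq.
pose z0 := ((p + q) / 2) *: u.
pose m : R := n%:R.
have m0 : 0 <= m by [].
pose δ := (q - p) / (2 * (m + 1)).
have hm : 0 < 2 * (m + 1) by lra.
have δ0 : 0 < δ by rewrite divr_gt0 // subr_gt0.
have hδ : δ * (2 * (m + 1)) = q - p by rewrite /δ mulfVK // gt_eqF.
pose G k := ~` closure (F k).
have dG : dense (T := rVc R n) (\bigcap_k G k).
  apply: (@Baire R (rVc R n)) => k; split.
    exact: closed_openC (@closed_closure _ _).
  move=> Ob [w0 Obo] oOb.
  have [//|none] := pselect (Ob `&` G k !=set0).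
  exfalso.
  have sub' : Ob `<=` closure (F k).
    move=> w Obw; apply: contrapT => nw; apply: none; by exists w.
  have : (closure (F k))° w0.
    by apply: (interiorS sub'); move: oOb; rewrite openE => /(_ w0 Obo).
  by rewrite (nd k).
have [z [bz Gz]] := dG (ball z0 δ) (ex_intro _ z0 (ballxx z0 δ0)) (ball_open z0 δ).
exists z; split; last first.
  move=> /sub [k _ Fk]; apply: (Gz k I); exact: subset_closure.
have hd : forall i, `|(z - z0) ord0 i| <= δ.
  move=> i; move: bz; rewrite -ball_normE /ball_ /= => h.
  apply: ltW; apply: le_lt_trans h; rewrite -normrN opprB; exact: entry_le_norm.
have hb := @dot_bound u (z - z0) δ (fun i => @unit_entry u i hu) hd.
rewrite dotpB /z0 dotpZ dotpp hu mulr1 in hb.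
have hnd : m * δ < (q - p) / 2 by nra.
move: hb; rewrite ler_norml => /andP [h1 h2].
rewrite -/m in h1 h2; apply/andP; split; lra.
Qed.

Lemma cov_inf (P : set (set V)) x : coverage P x = +oo%E ->
  forall M : R, exists c r, M < r /\ anchor P x c r.
Proof.
rewrite /coverage /=; case: ifPn => [_ //|_ hs] M.
have [//|no] := pselect (exists c r, M < r /\ anchor P x c r).
exfalso.
have : (ereal_sup [set (r%:E)%E | r in [set r | exists c, anchor P x c r]] <= M%:E)%E.
  apply: ge_ereal_sup => _ [r [c hc] <-]; rewrite lee_fin.
  rewrite leNgt; apply/negP => Mr; apply: no; exists c, r; done.
by rewrite hs leye_eq.
Qed.

Lemma cov_of (P : set (set V)) x : (forall M : R, exists c r, M < r /\ anchor P x c r) ->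
  coverage P x = +oo%E.
Proof.
move=> H; rewrite /coverage /=; case: ifPn => [/eqP h0|_].
  have [c [r [_ ha]]] := H 0.
  have : [set (r%:E)%E | r in [set r | exists c, anchor P x c r]] r%:E.
    by exists r => //; exists c.
  by rewrite h0.
have ub : forall M : R, (M%:E <= ereal_sup [set (r%:E)%E | r in [set r | exists c, anchor P x c r]])%E.
  move=> M; have [c [r [Mr ha]]] := H M.
  apply: le_trans (ereal_sup_ubound _); last by exists r => //; exists c.
  by rewrite lee_fin ltW.
move: ub; case: (ereal_sup _) => [s| |] ub //.
  have := ub (s + 1); rewrite lee_fin => h.
  have h' : s + 1 <= s + 0 by rewrite addr0.
  by move: h'; rewrite lerD2l ler10.
by have := ub 0.
Qed.
Lemma sq0 : sq (0 : V) = 0.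
Proof. by rewrite /sq big1 // => i _; rewrite mxE expr0n. Qed.

Lemma main_fwd (P : set (set V)) (Rf : set V) :
  classifier P Rf -> nontrivial P Rf ->
  infinite_pointwise_coverage P Rf -> refined_linear P Rf.
Proof.
move=> [[pdisj [pcov pne]] [PRf [mRf _]]] [A0 [B0 [[PA0 A0R] [[PB0 B0R] AB]]]] hipc.
have covx : forall x, feature_space P Rf x -> coverage P x = +oo%E.
  move=> x fx; apply/eqP; rewrite -leye_eq -hipc; apply: ereal_inf_lbound; by exists x.
have anch : forall L x, P L -> L <> Rf -> L x -> forall M : R,
    exists c r, M < r /\ eball c r x /\ eball c r `<=` L.
  move=> L x PL LR Lx M.
  have fx : feature_space P Rf x by exists L.
  have [c [r [Mr [r0 [bx hA]]]]] := @cov_inf P x (covx x fx) M.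
  by exists c, r; split => //; split => //; exact: hA L PL Lx.
have hs : forall L x, P L -> L <> Rf -> L x ->
    exists u, sq u = 1 /\ forall y, dotp u x < dotp u y -> L y.
  move=> L x PL LR Lx.
  have [pt no] : exists pt, ~ L pt.
    case: (pselect (L = A0)) => [LA|LA].
      have [pt Bo] := pne B0 PB0 B0R; exists pt => Lo; apply: AB.
      by rewrite -LA; exact: (pdisj L B0 pt PL PB0 Lo Bo).
    have [pt Ao] := pne A0 PA0 A0R; exists pt => Lo; apply: LA.
    exact: (pdisj L A0 pt PL PA0 Lo Ao).
  exact: (@halfspace L x pt (anch L x PL LR Lx) no).
have dd : forall L1 L2 x y u v, P L1 -> P L2 -> L1 <> L2 -> L1 x -> L2 y ->
    sq u = 1 -> sq v = 1 -> (forall z, dotp u x < dotp u z -> L1 z) ->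
    (forall z, dotp v y < dotp v z -> L2 z) -> v = - u /\ dotp u y <= dotp u x.
  move=> L1 L2 x y u v PL1 PL2 L12 L1x L2y hu hv H1 H2.
  apply: opp_dir => // z h1 h2; apply: L12.
  exact: (pdisj L1 L2 z PL1 PL2 (H1 z h1) (H2 z h2)).
have [x0 Ax0] := pne A0 PA0 A0R.
have [y0 By0] := pne B0 PB0 B0R.
have [u0 [hu0 Hu0]] := hs A0 x0 PA0 A0R Ax0.
have [v0 [hv0 Hv0]] := hs B0 y0 PB0 B0R By0.
have v0e : v0 = - u0 := (dd A0 B0 x0 y0 u0 v0 PA0 PB0 AB Ax0 By0 hu0 hv0 Hu0 Hv0).1.
have dirA : forall x u, A0 x -> sq u = 1 -> (forall z, dotp u x < dotp u z -> A0 z) -> u = u0.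
  move=> x u Ax hu Hu.
  have := (dd A0 B0 x y0 u v0 PA0 PB0 AB Ax By0 hu hv0 Hu Hv0).1.
  by rewrite v0e => /oppr_inj.
have dirB : forall y v, B0 y -> sq v = 1 -> (forall z, dotp v y < dotp v z -> B0 z) -> v = - u0.
  move=> y v By hv Hv.
  exact: (dd A0 B0 x0 y u0 v PA0 PB0 AB Ax0 By hu0 hv Hu0 Hv).1.
have labels : forall L, P L -> L <> Rf -> L = A0 \/ L = B0.
  move=> L PL LR.
  case: (pselect (L = A0)) => [->|LA]; first by left.
  case: (pselect (L = B0)) => [->|LB]; first by right.
  exfalso.
  have [z Lz] := pne L PL LR.
  have [w [hw Hw]] := hs L z PL LR Lz.
  have e1 := (dd A0 L x0 z u0 w PA0 PL (fun h => LA (esym h)) Ax0 Lz hu0 hw Hu0 Hw).1.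
  have e2 := (dd B0 L y0 z v0 w PB0 PL (fun h => LB (esym h)) By0 Lz hv0 hw Hv0 Hw).1.
  rewrite v0e opprK e1 in e2.
  have := dotpp u0; rewrite -{2}e2 dotpN dotpp hu0 => h.
  have : (1 : R) = 0 by lra.
  by apply/eqP; rewrite oner_eq0.
have ord : forall x y, A0 x -> B0 y -> dotp u0 y <= dotp u0 x.
  move=> x y Ax By.
  have [ux [hux Hux]] := hs A0 x PA0 A0R Ax.
  have [vy [hvy Hvy]] := hs B0 y PB0 B0R By.
  have := (dd A0 B0 x y ux vy PA0 PB0 AB Ax By hux hvy Hux Hvy).2.
  by rewrite (dirA x ux Ax hux Hux).
pose SA := [set dotp u0 x | x in A0].
pose α := inf SA.
have SA0 : SA !=set0 by exists (dotp u0 x0), x0.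
have lbSA : has_lbound SA by exists (dotp u0 y0) => _ [x Ax <-]; exact: ord.
have Aopen : forall z, A0 z -> exists z', A0 z' /\ dotp u0 z' < dotp u0 z.
  move=> z Az.
  have [c [r [_ [bz sb]]]] := anch A0 z PA0 A0R Az 0.
  have [e [e0 be]] := @eball_move _ _ _ _ bz (etrans (sqN u0) hu0).
  exists (z + e *: - u0); split; first exact: sb.
  by rewrite dotpD dotpZ dotpN dotpp hu0; lra.
have Bopen : forall z, B0 z -> exists z', B0 z' /\ dotp u0 z < dotp u0 z'.
  move=> z Bz.
  have [c [r [_ [bz sb]]]] := anch B0 z PB0 B0R Bz 0.
  have [e [e0 be]] := @eball_move _ _ _ _ bz hu0.
  exists (z + e *: u0); split; first exact: sb.
  by rewrite dotpD dotpZ dotpp hu0; lra.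
have Achar : forall z, A0 z <-> α < dotp u0 z.
  move=> z; split.
    move=> Az; have [z' [Az' lt]] := Aopen z Az.
    apply: le_lt_trans lt; apply: (ge_inf lbSA); by exists z'.
  move=> h; have [_ [x Ax <-] lt] := inf_lt SA0 h.
  have [ux [hux Hux]] := hs A0 x PA0 A0R Ax.
  have e := dirA x ux Ax hux Hux; rewrite e in Hux.
  exact: Hux.
have Bchar : forall z, B0 z <-> dotp u0 z < α.
  move=> z; split.
    move=> Bz; have [z' [Bz' lt]] := Bopen z Bz.
    apply: lt_le_trans lt _; apply: lb_le_inf SA0 _ => _ [x Ax <-]; exact: ord.
  move=> h.
  have [w [/andP [h1 h2] nRw]] := @slab_point Rf u0 _ _ mRf hu0 h.
  have [C [PC Cw]] := pcov w.
  have CR : C <> Rf by move=> CR; apply: nRw; rewrite -CR.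
  case: (labels C PC CR) => CE; rewrite CE in Cw.
    by move/Achar: Cw; lra.
  have [v [hv Hv]] := hs B0 w PB0 B0R Cw.
  have ev := dirB w v Cw hv Hv; rewrite ev in Hv.
  apply: Hv; rewrite !dotpNl; lra.
have nA : forall z, Rf z -> ~ A0 z.
  by move=> z Rz Az; apply: A0R; exact: (pdisj A0 Rf z PA0 PRf Az Rz).
have nB : forall z, Rf z -> ~ B0 z.
  by move=> z Rz Bz; apply: B0R; exact: (pdisj B0 Rf z PB0 PRf Bz Rz).
have Rchar : forall z, Rf z <-> dotp u0 z = α.
  move=> z; split.
    move=> Rz; apply/eqP; rewrite eq_le; apply/andP; split; rewrite leNgt; apply/negP => h.
      by apply: (nA z Rz); apply/Achar.
    by apply: (nB z Rz); apply/Bchar.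
  move=> h; have [C [PC Cz]] := pcov z.
  case: (pselect (C = Rf)) => [<- //|CR].
  case: (labels C PC CR) => CE; rewrite CE in Cz.
    by move/Achar: Cz; lra.
  by move/Bchar: Cz; lra.
have eA : A0 = [set x | dotp u0 x > α] by apply/seteqP; split => z /Achar.
have eB : B0 = [set x | dotp u0 x < α] by apply/seteqP; split => z /Bchar.
exists u0, α; split.
  by apply/eqP => u00; move: hu0; rewrite u00 sq0 => /eqP; rewrite eq_sym oner_eq0.
split.
  by apply/seteqP; split => z /Rchar.
split.
  apply/seteqP; split => L /=.
    move=> PL; case: (pselect (L = Rf)) => [->|LR]; first by right; right.
    by case: (labels L PL LR) => ->; [left | right; left].
  by case=> [->|[->|->]] //; rewrite -?eA -?eB.
apply/seteqP; split => L /=.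
  move=> [PL LR]; by case: (labels L PL LR) => ->; [left | right].
by case=> ->; [rewrite -eA | rewrite -eB].
Qed.
Lemma main_bwd (P : set (set V)) (Rf : set V) :
  refined_linear P Rf -> infinite_pointwise_coverage P Rf.
Proof.
move=> [a [b [a0 /= [eRf [eP eL]]]]].
apply/eqP; rewrite -leye_eq; apply: le_ereal_inf_tmp => _ [x fx <-].
rewrite cov_of //.
move=> M.
have sa : 0 < sq a := @sq_gt0 a a0.
pose μ := Num.sqrt (sq a).
have μ0 : 0 < μ by rewrite sqrtr_gt0.
pose u := μ^-1 *: a.
have hu : sq u = 1 by rewrite sqZ exprVn sqr_sqrtr ?ltW // mulVf // gt_eqF.
have du : forall y, dotp u y = μ^-1 * dotp a y by move=> y; rewrite dotpZl.
have iμ : 0 < μ^-1 by rewrite invr_gt0.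
have [L lL Lx] := fx.
rewrite eL /= in lL.
case: lL => LE; rewrite LE /= in Lx.
-
  pose γ := μ^-1 * dotp a x - μ^-1 * b.
  have γ0 : 0 < γ by rewrite /γ -mulrBr mulr_gt0 // subr_gt0.
  have [c [r [Mr [bx hy]]]] := @big_anchor u x γ `|M| hu γ0.
  exists c, r; split; first by apply: le_lt_trans Mr; exact: ler_norm.
  split; first by apply: le_lt_trans Mr.
  split => // A PA Ax y by_.
  have := hy y by_; rewrite !du /γ opprB addrCA subrr addr0 ltr_pM2l // => hby.
  move: PA; rewrite eP /= => -[AE|[AE|AE]]; rewrite AE /= in Ax *; rewrite ?AE //.
  + by move: Ax; rewrite /=; lra.
  + by move: Ax; rewrite eRf /=; lra.
-
  pose γ := μ^-1 * b - μ^-1 * dotp a x.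
  have γ0 : 0 < γ by rewrite /γ -mulrBr mulr_gt0 // subr_gt0.
  have hu' : sq (- u) = 1 by rewrite sqN.
  have [c [r [Mr [bx hy]]]] := @big_anchor (- u) x γ `|M| hu' γ0.
  exists c, r; split; first by apply: le_lt_trans Mr; exact: ler_norm.
  split; first by apply: le_lt_trans Mr.
  split => // A PA Ax y by_.
  have := hy y by_; rewrite !dotpNl !du /γ => hby.
  have hby' : μ^-1 * dotp a y < μ^-1 * b by lra.
  move: hby'; rewrite ltr_pM2l // => hby2.
  move: PA; rewrite eP /= => -[AE|[AE|AE]]; rewrite AE /= in Ax *; rewrite ?AE //.
  + by move: Ax; rewrite /=; lra.
  + by move: Ax; rewrite eRf /=; lra.
Qed.
End Main.

Theorem theorem1 (R : realType) (n : nat) (P : set (set 'rV[R]_n)) (Rf : set 'rV[R]_n) :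
  classifier P Rf -> nontrivial P Rf ->
  (infinite_pointwise_coverage P Rf <-> refined_linear P Rf).
Proof.
move=> hc hn; split; [exact: main_fwd | exact: main_bwd].
Qed.
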